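(* Let $M=\{D_1,\dots,D_m\}$, $m\ge3$, be a 2-disk system of pairwise distinct disks with Vietoris–Rips scale $\nu_M>0$, and let $\lambda\ge\nu_M$. Then $\bigcap_{i=1}^m D(c_i;\lambda r_i)\ne\emptyset$ if and only if $\rho_M(\lambda)\ge0$. In particular $\rho_M(\sqrt{4/3}\,\nu_M)\ge0$.
   Context: A 2-disk system is a finite collection of closed disks $D_i=D(c_i;r_i)\subset\mathbb R^2$ with $r_i>0$; $\partial D$ is the boundary circle. $\nu_M=\max_{i<j}\|c_i-c_j\|/(r_i+r_j)$ is the Vietoris–Rips scale. Definition of $d_{ij}$ for two intersecting disks $D_i,D_j$ ($i\ne j$): write $c_j-c_i=(a,b)$, $\mathbf n_{ij}=(-b,a)$. (1) If $\partial D_i\cap\partial D_j\ne\emptyset$, $d_{ij}$ is the unique point of $\partial D_i\cap\partial D_j$ with $\langle d_{ij}-c_i,\mathbf n_{ij}\rangle\ge0$. (2) If $\partial D_i\cap\partial D_j=\emptyset$, let $\lambda_0=\|c_i-c_j\|/|r_i-r_j|$ and $d_{ij}$ is the unique point of $\partial D(c_i;\lambda_0 r_i)\cap\partial D(c_j;\lambda_0 r_j)$ (equal to $c_i$ if $c_i=c_j$). $d_{ij}(\lambda)$ denotes this point for the rescaled disks $D(c_i;\lambda r_i),D(c_j;\lambda r_j)$. For $\lambda\ge\nu_M$, $\rho_M(\lambda)=\max_{i\ne j}\min_{k\notin\{i,j\}}\big(\lambda r_k-\|d_{ij}(\lambda)-c_k\|\big)$. *)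

(* Defs.v *)
From Stdlib Require Import Reals Lra List Arith ClassicalEpsilon.
Open Scope R_scope.

Definition pt := (R * R)%type.

Definition pdist (p q : pt) : R :=
  sqrt ((fst p - fst q)^2 + (snd p - snd q)^2).

(* A 2-disk system of m disks: D_i = D(c i; r i), i = 0..m-1. *)

Definition lmax (l : list R) : R :=
  match l with nil => 0 | x :: t => fold_right Rmax x t end.
Definition lmin (l : list R) : R :=
  match l with nil => 0 | x :: t => fold_right Rmin x t end.

Definition idx_pairs (m : nat) : list (nat * nat) :=
  flat_map (fun i => map (fun j => (i, j))
                          (filter (fun j => negb (Nat.eqb i j)) (seq 0 m)))
           (seq 0 m).

Definition nuM (m : nat) (c : nat -> pt) (r : nat -> R) : R :=
  lmax (map (fun ij => pdist (c (fst ij)) (c (snd ij)) / (r (fst ij) + r (snd ij)))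
            (idx_pairs m)).

(* <d - c_i, n_ij>, where c_j - c_i = (a,b) and n_ij = (-b, a) *)
Definition cross_n (ci cj d : pt) : R :=
  let a := fst cj - fst ci in
  let b := snd cj - snd ci in
  (fst d - fst ci) * (- b) + (snd d - snd ci) * a.

(* Defining property of d_ij(lambda) (for the rescaled disks
   D(c_i; lambda r_i), D(c_j; lambda r_j)):
   (1) if the boundary circles meet, d is the point of the intersection
       with <d - c_i, n_ij> >= 0;
   (2) otherwise, with lambda0 = |c_i - c_j| / |r_i - r_j| (computed for the
       rescaled radii; the factor lambda cancels, so we use lambda0 * r_i,
       lambda0 * r_j directly), d lies on both circles
       dD(c_i; lambda0 r_i) and dD(c_j; lambda0 r_j) (d = c_i if c_i = c_j). *)
Definition dij_spec (ci cj : pt) (ri rj lam : R) (d : pt) : Prop :=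
  ((exists q, pdist q ci = lam * ri /\ pdist q cj = lam * rj) ->
     pdist d ci = lam * ri /\ pdist d cj = lam * rj /\ 0 <= cross_n ci cj d)
  /\
  (~ (exists q, pdist q ci = lam * ri /\ pdist q cj = lam * rj) ->
     let lam0 := pdist ci cj / (lam * Rabs (ri - rj)) * lam in
     pdist d ci = lam0 * ri /\ pdist d cj = lam0 * rj).

(* d_ij(lambda): "the unique point" with the defining property, chosen via
   Hilbert's epsilon (uniqueness is part of the paper's claim). *)
Definition dij (c : nat -> pt) (r : nat -> R) (lam : R) (i j : nat) : pt :=
  epsilon (inhabits (0, 0)) (dij_spec (c i) (c j) (r i) (r j) lam).

Definition rhoM (m : nat) (c : nat -> pt) (r : nat -> R) (lam : R) : R :=
  lmax (map (fun ij =>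
          let i := fst ij in let j := snd ij in
          lmin (map (fun k => lam * r k - pdist (dij c r lam i j) (c k))
                    (filter (fun k => andb (negb (Nat.eqb k i)) (negb (Nat.eqb k j)))
                            (seq 0 m))))
        (idx_pairs m)).

(* Main.v *)
Require Import Defs.
From Stdlib Require Import Reals.
From Stdlib Require Import Lra Lia Psatz List Arith ClassicalEpsilon.
Open Scope R_scope.


Lemma sqrt_eq_sq X d : 0 <= d -> X = d^2 -> sqrt X = d.
Proof. intros H1 H2; subst; apply sqrt_pow2; auto. Qed.
Lemma sqrt_le_sq X d : 0 <= d -> X <= d^2 -> sqrt X <= d.
Proof. intros H1 H2. rewrite <- (sqrt_pow2 d H1). apply sqrt_le_1_alt; auto. Qed.
Lemma sqrt_lt_sq X d : 0 <= X -> 0 <= d -> X < d^2 -> sqrt X < d.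
Proof. intros H0 H1 H2. rewrite <- (sqrt_pow2 d H1). apply sqrt_lt_1_alt; auto. Qed.
Lemma sq_le_sqrt X d : 0 <= d -> d^2 <= X -> d <= sqrt X.
Proof. intros H1 H2. rewrite <- (sqrt_pow2 d H1). apply sqrt_le_1_alt; auto. Qed.
Lemma sqrt_sq_eq X d : 0 <= X -> sqrt X = d -> X = d^2.
Proof. intros H0 H; subst; rewrite pow2_sqrt; auto. Qed.

Lemma sq_le_imp X Y : 0 <= Y -> X^2 <= Y^2 -> X <= Y.
Proof. intros. destruct (Rle_dec X Y); auto. apply Rnot_le_lt in n. nra. Qed.
Lemma sq_lt_imp X Y : 0 <= Y -> X^2 < Y^2 -> X < Y.
Proof. intros. destruct (Rlt_dec X Y); auto. apply Rnot_lt_le in n. nra. Qed.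

Lemma pow_lt_pos_sq_helper x : x <> 0 -> 0 < x^2.
Proof. intros. assert (0 < x*x) by (apply Rsqr_pos_lt; auto). nra. Qed.
Lemma sq0 x : x^2 = 0 -> x = 0.
Proof. intros H. destruct (Req_dec x 0); auto. apply pow_lt_pos_sq_helper in H0. lra. Qed.

Definition nsq (p q : pt) := (fst p - fst q)^2 + (snd p - snd q)^2.
Lemma nsq_ge0 p q : 0 <= nsq p q.
Proof. unfold nsq; apply Rplus_le_le_0_compat; apply pow2_ge_0. Qed.
Lemma pdist_nsq p q : pdist p q = sqrt (nsq p q).
Proof. reflexivity. Qed.
Lemma pdist_ge0 p q : 0 <= pdist p q.
Proof. apply sqrt_pos. Qed.
Lemma pdist_sq p q : (pdist p q)^2 = nsq p q.
Proof. rewrite pdist_nsq, pow2_sqrt; auto using nsq_ge0. Qed.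
Lemma pdist_eq_iff p q d : 0 <= d -> (pdist p q = d <-> nsq p q = d^2).
Proof. intros Hd; split; intro H.
 - rewrite <- H, pdist_sq; auto.
 - apply sqrt_eq_sq; auto. Qed.
Lemma pdist_le_iff p q d : 0 <= d -> (pdist p q <= d <-> nsq p q <= d^2).
Proof. intros Hd; split; intro H.
 - rewrite <- pdist_sq. pose proof (pdist_ge0 p q). nra.
 - apply sqrt_le_sq; auto. Qed.
Lemma pdist_lt_iff p q d : 0 <= d -> (pdist p q < d <-> nsq p q < d^2).
Proof. intros Hd; split; intro H.
 - rewrite <- pdist_sq. pose proof (pdist_ge0 p q). nra.
 - rewrite pdist_nsq; apply sqrt_lt_sq; auto using nsq_ge0. Qed.
Lemma pdist_sym p q : pdist p q = pdist q p.
Proof. unfold pdist; f_equal; ring. Qed.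
Lemma pdist_self p : pdist p p = 0.
Proof. apply sqrt_eq_sq; [lra|]. unfold nsq; ring. Qed.

Lemma norm_sub (u1 u2 v1 v2 : R) :
  sqrt ((u1+v1)^2 + (u2+v2)^2) <= sqrt (u1^2+u2^2) + sqrt (v1^2+v2^2).
Proof.
  set (a := sqrt (u1^2+u2^2)). set (b := sqrt (v1^2+v2^2)).
  assert (Ha : a^2 = u1^2+u2^2) by (apply pow2_sqrt; apply Rplus_le_le_0_compat; apply pow2_ge_0).
  assert (Hb : b^2 = v1^2+v2^2) by (apply pow2_sqrt; apply Rplus_le_le_0_compat; apply pow2_ge_0).
  assert (a0 : 0 <= a) by apply sqrt_pos. assert (b0 : 0 <= b) by apply sqrt_pos.
  apply sqrt_le_sq; [lra|]. clearbody a b.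
  assert (u1*v1+u2*v2 <= a*b).
  { assert ((u1*v1+u2*v2)^2 <= (a*b)^2).
    { replace ((a*b)^2) with (a^2*b^2) by ring. rewrite Ha, Hb. pose proof (pow2_ge_0 (u1*v2-u2*v1)). nra. }
    apply sq_le_imp; auto. apply Rmult_le_pos; auto. }
  nra.
Qed.
Lemma pdist_tri p q s : pdist p s <= pdist p q + pdist q s.
Proof.
  destruct p as [p1 p2], q as [q1 q2], s as [s1 s2]; unfold pdist; simpl.
  replace (p1 - s1) with ((p1-q1)+(q1-s1)) by ring.
  replace (p2 - s2) with ((p2-q2)+(q2-s2)) by ring.
  apply norm_sub.
Qed.


Lemma circ_construct (ci cj : pt) R1 R2 :
  0 < pdist ci cj -> 0 <= R1 -> 0 <= R2 ->
  R1 - R2 <= pdist ci cj -> R2 - R1 <= pdist ci cj -> pdist ci cj <= R1 + R2 ->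
  exists q, pdist q ci = R1 /\ pdist q cj = R2 /\ 0 <= cross_n ci cj q.
Proof.
  intros HD H1 H2 Ha Hb Hc.
  pose proof (pdist_sq ci cj) as HDs.
  set (D := pdist ci cj) in *. clearbody D.
  destruct ci as [x1 y1], cj as [x2 y2]. unfold nsq in HDs; cbn [fst snd] in HDs.
  unfold cross_n; cbn [fst snd].
  remember (x2 - x1) as e1 eqn:E1. remember (y2 - y1) as e2 eqn:E2.
  replace x2 with (x1 + e1) in * by lra. replace y2 with (y1 + e2) in * by lra.
  assert (HE : e1^2 + e2^2 = D^2) by (rewrite HDs; ring).
  clear HDs E1 E2.
  set (al := (D^2 + R1^2 - R2^2) / (2*D)).
  assert (Hal : 4*D^2*(R1^2 - al^2) = (R2^2 - (D-R1)^2)*((D+R1)^2 - R2^2)).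
  { unfold al. field. lra. }
  assert (Hpos : 0 <= R1^2 - al^2).
  { assert (0 <= R2^2 - (D-R1)^2) by nra.
    assert (0 <= (D+R1)^2 - R2^2) by nra.
    assert (0 <= 4*D^2*(R1^2 - al^2)) by (rewrite Hal; apply Rmult_le_pos; auto).
    assert (0 < 4*D^2) by nra. nra. }
  set (h := sqrt (R1^2 - al^2)).
  assert (Hh : h^2 = R1^2 - al^2) by (apply pow2_sqrt; auto).
  assert (h0 : 0 <= h) by apply sqrt_pos.
  assert (Hald : al*(2*D) = D^2+R1^2-R2^2) by (unfold al; field; lra).
  clearbody h. clearbody al.
  exists (x1 + (al*e1 - h*e2)/D, y1 + (al*e2 + h*e1)/D).
  split; [|split].
  - apply pdist_eq_iff; auto. unfold nsq; cbn [fst snd].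
    transitivity ((al^2+h^2)*(e1^2+e2^2)/D^2). field; lra.
    rewrite HE, Hh. field; lra.
  - apply pdist_eq_iff; auto. unfold nsq; cbn [fst snd].
    transitivity (((al-D)^2+h^2)*(e1^2+e2^2)/D^2). field; lra.
    rewrite HE, Hh. field_simplify; [|lra]. nra.
  - cbn [fst snd]. match goal with |- 0 <= ?X => replace X with (h * (e1^2+e2^2)/D) by (field; lra) end.
    rewrite HE. replace (h*D^2/D) with (h*D) by (field; lra). nra.
Qed.

Lemma sq_eq_nonneg a b : 0 <= a -> 0 <= b -> a^2 = b^2 -> a = b.
Proof. intros Ha Hb Hab. destruct (Rtotal_order a b) as [H|[H|H]]; auto; nra. Qed.


Lemma pt_neq_pos (x1 y1 x2 y2 : R) : (x1, y1) <> (x2, y2) -> 0 < (x2-x1)^2 + (y2-y1)^2.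
Proof.
  intros H. destruct (Req_dec x1 x2); destruct (Req_dec y1 y2).
  - subst; congruence.
  - assert (0 < (y2-y1)^2) by (apply pow_lt_pos_sq_helper; lra). nra.
  - assert (0 < (x2-x1)^2) by (apply pow_lt_pos_sq_helper; lra). nra.
  - assert (0 < (x2-x1)^2) by (apply pow_lt_pos_sq_helper; lra). nra.
Qed.

Lemma circ_unique ci cj R1 R2 q1 q2 : ci <> cj ->
  pdist q1 ci = R1 -> pdist q1 cj = R2 -> pdist q2 ci = R1 -> pdist q2 cj = R2 ->
  0 <= cross_n ci cj q1 -> 0 <= cross_n ci cj q2 -> q1 = q2.
Proof.
  intros Hne A1 A2 B1 B2 C1 C2.
  assert (0 <= R1) by (rewrite <- A1; apply pdist_ge0).
  assert (0 <= R2) by (rewrite <- A2; apply pdist_ge0).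
  apply pdist_eq_iff in A1, A2, B1, B2; auto.
  destruct ci as [x1 y1], cj as [x2 y2], q1 as [a1 a2], q2 as [b1 b2].
  apply pt_neq_pos in Hne.
  unfold nsq, cross_n in *; cbn [fst snd] in *.
  remember (x2 - x1) as e1. remember (y2 - y1) as e2.
  replace x2 with (x1 + e1) in * by lra. replace y2 with (y1 + e2) in * by lra.
  remember (a1 - x1) as u1. remember (a2 - y1) as u2.
  remember (b1 - x1) as v1. remember (b2 - y1) as v2.
  replace a1 with (x1 + u1) in * by lra. replace a2 with (y1 + u2) in * by lra.
  replace b1 with (x1 + v1) in * by lra. replace b2 with (y1 + v2) in * by lra.
  assert (A1' : u1^2+u2^2 = R1^2) by (rewrite <- A1; ring).
  assert (B1' : v1^2+v2^2 = R1^2) by (rewrite <- B1; ring).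
  assert (A2' : (u1^2+u2^2) - 2*(u1*e1+u2*e2) + (e1^2+e2^2) = R2^2) by (rewrite <- A2; ring).
  assert (B2' : (v1^2+v2^2) - 2*(v1*e1+v2*e2) + (e1^2+e2^2) = R2^2) by (rewrite <- B2; ring).
  assert (C1' : 0 <= u1 * - e2 + u2 * e1) by (eapply Rle_trans; [apply C1|right; ring]).
  assert (C2' : 0 <= v1 * - e2 + v2 * e1) by (eapply Rle_trans; [apply C2|right; ring]).
  assert (Hpe : 0 < e1^2+e2^2) by (eapply Rlt_le_trans; [apply Hne|right; ring]).
  clear A1 A2 B1 B2 C1 C2 Hne.
  assert (Hu : u1*e1 + u2*e2 = v1*e1 + v2*e2) by lra.
  assert (Hc : u1 * - e2 + u2 * e1 = v1 * - e2 + v2 * e1).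
  { apply sq_eq_nonneg; auto.
    replace ((u1 * - e2 + u2 * e1)^2) with ((u1^2+u2^2)*(e1^2+e2^2) - (u1*e1+u2*e2)^2) by ring.
    replace ((v1 * - e2 + v2 * e1)^2) with ((v1^2+v2^2)*(e1^2+e2^2) - (v1*e1+v2*e2)^2) by ring.
    rewrite Hu, A1', B1'. ring. }
  assert (Hw : ((u1-v1)^2 + (u2-v2)^2) * (e1^2+e2^2) = 0).
  { replace (((u1-v1)^2 + (u2-v2)^2) * (e1^2+e2^2)) with
      (((u1-v1)*e1 + (u2-v2)*e2)^2 + ((u1-v1)*(-e2) + (u2-v2)*e1)^2) by ring.
    replace ((u1-v1)*e1 + (u2-v2)*e2) with 0 by lra.
    replace ((u1-v1)*(-e2) + (u2-v2)*e1) with 0 by lra. ring. }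
  apply Rmult_integral in Hw. destruct Hw as [Hw|Hw]; [|lra].
  pose proof (pow2_ge_0 (u1-v1)); pose proof (pow2_ge_0 (u2-v2)).
  assert (u1 - v1 = 0) by (apply sq0; lra). assert (u2 - v2 = 0) by (apply sq0; lra).
  assert (u1 = v1) by lra. assert (u2 = v2) by lra. subst. reflexivity.
Qed.

Lemma pdist_zero p q : pdist p q = 0 -> p = q.
Proof.
  intros H. apply pdist_eq_iff in H; [|lra].
  destruct p as [a b], q as [c d]; unfold nsq in H; cbn [fst snd] in H.
  pose proof (pow2_ge_0 (a-c)); pose proof (pow2_ge_0 (b-d)).
  assert (a - c = 0) by (apply sq0; nra). assert (b - d = 0) by (apply sq0; nra).
  f_equal; lra.
Qed.

Lemma pdist_pos p q : p <> q -> 0 < pdist p q.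
Proof.
  intros H. destruct (pdist_ge0 p q) as [H1|H1]; auto.
  symmetry in H1. apply pdist_zero in H1. contradiction.
Qed.

Lemma div_nonneg a b : 0 <= a -> 0 < b -> 0 <= a / b.
Proof. intros. unfold Rdiv. apply Rmult_le_pos; auto. left; apply Rinv_0_lt_compat; auto. Qed.

Section Spec.
Variables (ci cj : pt) (ri rj lam : R).
Hypotheses (Hlam : 0 < lam) (Hri : 0 < ri) (Hrj : 0 < rj)
  (Hne : (ci, ri) <> (cj, rj)) (Hd : pdist ci cj <= lam * (ri + rj)).

Lemma no_inter_lt :
  ~ (exists q, pdist q ci = lam * ri /\ pdist q cj = lam * rj) ->
  pdist ci cj < lam * Rabs (ri - rj).
Proof.
  intros Hn. destruct (Rlt_dec (pdist ci cj) (lam * Rabs (ri - rj))) as [H|H]; auto.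
  exfalso. apply Rnot_lt_le in H.
  destruct (pdist_ge0 ci cj) as [HD|HD].
  - apply Hn. destruct (circ_construct ci cj (lam*ri) (lam*rj)) as [q [Q1 [Q2 _]]]; [auto|nra|nra| | |nra|eauto].
    + apply Rle_trans with (lam * Rabs (ri - rj)); auto.
      rewrite <- Rmult_minus_distr_l. apply Rmult_le_compat_l; [lra|]. apply RRle_abs.
    + apply Rle_trans with (lam * Rabs (ri - rj)); auto.
      rewrite <- Rmult_minus_distr_l. apply Rmult_le_compat_l; [lra|].
      rewrite Rabs_minus_sym. apply RRle_abs.
  - symmetry in HD. pose proof (pdist_zero _ _ HD). subst cj.
    rewrite pdist_self in H.
    assert (Rabs (ri - rj) <= 0) by nra.
    pose proof (Rabs_pos (ri - rj)).
    assert (ri - rj = 0) by (revert H0; unfold Rabs; destruct (Rcase_abs (ri - rj)); lra).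
    apply Hne. f_equal. lra.
Qed.

Lemma spec_exists : exists d, dij_spec ci cj ri rj lam d.
Proof.
  destruct (classic (exists q, pdist q ci = lam * ri /\ pdist q cj = lam * rj)) as [Hq|Hq].
  - destruct Hq as [q [Q1 Q2]].
    assert (Hcc : ci <> cj).
    { intros E. subst cj. rewrite Q1 in Q2. apply Hne. f_equal.
      apply Rmult_eq_reg_l with lam; lra. }
    pose proof (pdist_pos _ _ Hcc) as HD.
    pose proof (pdist_tri q ci cj). pose proof (pdist_tri q cj ci).
    pose proof (pdist_tri ci q cj).
    rewrite (pdist_sym cj ci) in *. rewrite (pdist_sym ci q) in *.
    destruct (circ_construct ci cj (lam*ri) (lam*rj)) as [q' [G1 [G2 G3]]]; auto; try nra.
    exists q'. split; auto.
    intros Hn. exfalso. apply Hn. exists q; auto.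
  - pose proof (no_inter_lt Hq) as Hlt.
    destruct (pdist_ge0 ci cj) as [HD|HD].
    + assert (Hrr : ri <> rj).
      { intros E. subst. rewrite Rminus_diag, Rabs_R0 in Hlt. lra. }
      destruct ci as [x1 y1], cj as [x2 y2].
      set (D := pdist (x1, y1) (x2, y2)) in *.
      assert (HDs : D^2 = (x2-x1)^2 + (y2-y1)^2) by (unfold D; rewrite pdist_sq; unfold nsq; cbn [fst snd]; ring).
      assert (HDe : pdist (x1, y1) (x2, y2) = D) by reflexivity.
      clearbody D.
      destruct (Rlt_dec rj ri) as [Hgt|Hgt].
      * rewrite Rabs_right in * by lra.
        set (k := ri / (ri - rj)).
        exists (x1 + k*(x2-x1), y1 + k*(y2-y1)).
        split. { intros Hn. exfalso. apply Hq, Hn. }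
        intros _. cbv zeta. rewrite HDe, Rabs_right by lra.
        replace (D / (lam * (ri - rj)) * lam) with (D / (ri - rj)) by (field; lra).
        assert (Hk : 1 < k) by (unfold k; apply Rmult_lt_reg_r with (ri - rj); [lra|]; field_simplify; lra).
        split; apply pdist_eq_iff.
        -- apply Rmult_le_pos; [apply div_nonneg|]; lra.
        -- unfold nsq; cbn [fst snd].
           transitivity (k^2 * D^2). rewrite HDs; ring. unfold k. field. lra.
        -- apply Rmult_le_pos; [apply div_nonneg|]; lra.
        -- unfold nsq; cbn [fst snd].
           transitivity ((k-1)^2 * D^2). rewrite HDs; ring. unfold k. field. lra.
      * assert (Hlt2 : ri < rj) by lra.
        rewrite Rabs_left in * by lra.
        set (k := ri / (rj - ri)).
        exists (x1 - k*(x2-x1), y1 - k*(y2-y1)).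
        split. { intros Hn. exfalso. apply Hq, Hn. }
        intros _. cbv zeta. rewrite HDe, Rabs_left by lra.
        replace (D / (lam * - (ri - rj)) * lam) with (D / (rj - ri)) by (field; lra).
        split; apply pdist_eq_iff.
        -- apply Rmult_le_pos; [apply div_nonneg|]; lra.
        -- unfold nsq; cbn [fst snd].
           transitivity (k^2 * D^2). rewrite HDs; ring. unfold k. field. lra.
        -- apply Rmult_le_pos; [apply div_nonneg|]; lra.
        -- unfold nsq; cbn [fst snd].
           transitivity ((k+1)^2 * D^2). rewrite HDs; ring. unfold k. field. lra.
    + exists ci. split. { intros Hn. exfalso. apply Hq, Hn. }
      intros _. cbv zeta. rewrite <- HD.
      replace (0 / (lam * Rabs (ri - rj)) * lam) with 0 by (unfold Rdiv; ring).
      symmetry in HD. pose proof (pdist_zero _ _ HD). subst cj.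
      rewrite pdist_self. split; ring.
Qed.

Lemma spec_in_disks d : dij_spec ci cj ri rj lam d ->
  pdist d ci <= lam * ri /\ pdist d cj <= lam * rj.
Proof.
  intros [S1 S2].
  destruct (classic (exists q, pdist q ci = lam * ri /\ pdist q cj = lam * rj)) as [Hq|Hq].
  - destruct (S1 Hq) as [A [B _]]. lra.
  - destruct (S2 Hq) as [A B]. pose proof (no_inter_lt Hq) as Hlt.
    pose proof (pdist_ge0 ci cj).
    assert (Ha : 0 < Rabs (ri - rj)).
    { destruct (Rabs_pos (ri - rj)); auto. rewrite <- H0 in Hlt. lra. }
    assert (pdist ci cj / (lam * Rabs (ri - rj)) * lam <= lam).
    { replace (pdist ci cj / (lam * Rabs (ri - rj)) * lam) with (pdist ci cj / Rabs (ri - rj)) by (field; lra).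
      apply Rmult_le_reg_r with (Rabs (ri - rj)); auto. field_simplify; lra. }
    split; [rewrite A|rewrite B]; apply Rmult_le_compat_r; lra.
Qed.

Lemma spec_on_circles d q : dij_spec ci cj ri rj lam d ->
  pdist q ci = lam * ri -> pdist q cj = lam * rj ->
  pdist d ci = lam * ri /\ pdist d cj = lam * rj /\ 0 <= cross_n ci cj d.
Proof. intros [S1 _] A B. apply S1. eauto. Qed.

End Spec.


Lemma fold_max_ge y t : y <= fold_right Rmax y t /\ forall x, In x t -> x <= fold_right Rmax y t.
Proof.
  induction t as [|a t IH]; simpl; [split; [lra|tauto]|].
  destruct IH as [IH1 IH2]. split.
  - eapply Rle_trans; [apply IH1|apply Rmax_r].
  - intros x [E|E]; [subst; apply Rmax_l|]. eapply Rle_trans; [apply IH2; auto|apply Rmax_r].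
Qed.
Lemma lmax_ge l x : In x l -> x <= lmax l.
Proof. destruct l as [|y t]; simpl; [tauto|]. intros [E|E]; [rewrite <- E; apply (proj1 (fold_max_ge _ _))|apply (proj2 (fold_max_ge y t)); auto]. Qed.
Lemma fold_max_in y t : In (fold_right Rmax y t) (y :: t).
Proof.
  induction t as [|a t IH]; [simpl; auto|]. cbn [fold_right].
  destruct (Rle_dec a (fold_right Rmax y t)) as [h|h].
  - rewrite Rmax_right by auto. simpl in *; tauto.
  - rewrite Rmax_left by lra. simpl; auto.
Qed.
Lemma lmax_in l : l <> nil -> In (lmax l) l.
Proof. destruct l as [|y t]; [congruence|]. intros _. apply fold_max_in. Qed.
Lemma lmax_lt l a : l <> nil -> (forall x, In x l -> x < a) -> lmax l < a.
Proof. intros H1 H2. apply H2, lmax_in; auto. Qed.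

Lemma fold_min_le y t : fold_right Rmin y t <= y /\ forall x, In x t -> fold_right Rmin y t <= x.
Proof.
  induction t as [|a t IH]; simpl; [split; [lra|tauto]|].
  destruct IH as [IH1 IH2]. split.
  - eapply Rle_trans; [apply Rmin_r|apply IH1].
  - intros x [E|E]; [subst; apply Rmin_l|]. eapply Rle_trans; [apply Rmin_r|apply IH2; auto].
Qed.
Lemma lmin_le l x : In x l -> lmin l <= x.
Proof. destruct l as [|y t]; simpl; [tauto|]. intros [E|E]; [rewrite <- E; apply (proj1 (fold_min_le _ _))|apply (proj2 (fold_min_le y t)); auto]. Qed.
Lemma fold_min_in y t : In (fold_right Rmin y t) (y :: t).
Proof.
  induction t as [|a t IH]; [simpl; auto|]. cbn [fold_right].
  destruct (Rle_dec a (fold_right Rmin y t)) as [h|h].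
  - rewrite Rmin_left by auto. simpl; auto.
  - rewrite Rmin_right by lra. simpl in *; tauto.
Qed.
Lemma lmin_in l : l <> nil -> In (lmin l) l.
Proof. destruct l as [|y t]; [congruence|]. intros _. apply fold_min_in. Qed.
Lemma lmin_ge0 l : (forall x, In x l -> 0 <= x) -> 0 <= lmin l.
Proof.
  destruct l as [|y t]; simpl; [lra|]. intros H.
  apply H. apply fold_min_in.
Qed.
Lemma lmax_ge0_ex l : l <> nil -> 0 <= lmax l -> exists x, In x l /\ 0 <= x.
Proof. intros H1 H2. exists (lmax l); split; auto. apply lmax_in; auto. Qed.

Lemma in_idx_pairs m i j : In (i, j) (idx_pairs m) <-> (i < m /\ j < m /\ i <> j)%nat.
Proof.
  unfold idx_pairs. rewrite in_flat_map. split.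
  - intros [x [Hx Hin]]. apply in_map_iff in Hin. destruct Hin as [y [E Hy]].
    inversion E; subst. apply filter_In in Hy. destruct Hy as [Hy Hb].
    apply in_seq in Hx, Hy. apply Bool.negb_true_iff, Nat.eqb_neq in Hb. lia.
  - intros [H1 [H2 H3]]. exists i. split; [apply in_seq; lia|].
    apply in_map_iff. exists j. split; auto. apply filter_In. split; [apply in_seq; lia|].
    apply Bool.negb_true_iff, Nat.eqb_neq; auto.
Qed.

Lemma in_filt m i j k :
  In k (filter (fun k => andb (negb (Nat.eqb k i)) (negb (Nat.eqb k j))) (seq 0 m)) <->
  (k < m /\ k <> i /\ k <> j)%nat.
Proof.
  rewrite filter_In, in_seq. rewrite Bool.andb_true_iff, !Bool.negb_true_iff, !Nat.eqb_neq. lia.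
Qed.

Lemma continuity_pt_ext f g x : (forall y, f y = g y) -> continuity_pt f x -> continuity_pt g x.
Proof. intros H. apply continuity_pt_locally_ext with 1; [lra|]. intros; auto. Qed.

Lemma cont_min f g : continuity f -> continuity g -> continuity (fun t => Rmin (f t) (g t)).
Proof.
  intros Hf Hg.
  assert (E : forall t, Rmin (f t) (g t) = ((f t + g t) - Rabs (f t - g t)) / 2).
  { intros t. unfold Rmin, Rabs. destruct (Rle_dec _ _), (Rcase_abs _); lra. }
  intros x. apply continuity_pt_ext with (f := fun t => ((f t + g t) - Rabs (f t - g t)) / 2).
  { intros; rewrite E; auto. }
  apply continuity_pt_div; [| apply continuity_pt_const; intros ? ?; auto | lra].
  apply continuity_pt_minus; [apply continuity_pt_plus; auto|].
  apply (continuity_pt_comp (fun t => f t - g t) Rabs). apply continuity_pt_minus; auto.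
  apply Rcontinuity_abs.
Qed.
Lemma cont_max f g : continuity f -> continuity g -> continuity (fun t => Rmax (f t) (g t)).
Proof.
  intros Hf Hg.
  assert (E : forall t, Rmax (f t) (g t) = ((f t + g t) + Rabs (f t - g t)) / 2).
  { intros t. unfold Rmax, Rabs. destruct (Rle_dec _ _), (Rcase_abs _); lra. }
  intros x. apply continuity_pt_ext with (f := fun t => ((f t + g t) + Rabs (f t - g t)) / 2).
  { intros; rewrite E; auto. }
  apply continuity_pt_div; [| apply continuity_pt_const; intros ? ?; auto | lra].
  apply continuity_pt_plus; [apply continuity_pt_plus; auto|].
  apply (continuity_pt_comp (fun t => f t - g t) Rabs). apply continuity_pt_minus; auto.
  apply Rcontinuity_abs.
Qed.

Lemma cont_lmin {A} (l : list A) (g : A -> R -> R) :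
  (forall a, continuity (g a)) -> continuity (fun t => lmin (map (fun a => g a t) l)).
Proof.
  intros Hg. destruct l as [|a0 l]; simpl.
  - intros x; apply continuity_pt_const; intros ? ?; auto.
  - generalize (g a0) (Hg a0). induction l as [|a l IH]; simpl; intros h Hh; auto.
    apply cont_min; auto.
Qed.
Lemma cont_lmax {A} (l : list A) (g : A -> R -> R) :
  (forall a, continuity (g a)) -> continuity (fun t => lmax (map (fun a => g a t) l)).
Proof.
  intros Hg. destruct l as [|a0 l]; simpl.
  - intros x; apply continuity_pt_const; intros ? ?; auto.
  - generalize (g a0) (Hg a0). induction l as [|a l IH]; simpl; intros h Hh; auto.
    apply cont_max; auto.
Qed.

Lemma cont_pdist (P : R -> pt) (q : pt) :
  continuity (fun t => fst (P t)) -> continuity (fun t => snd (P t)) ->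
  continuity (fun t => pdist (P t) q).
Proof.
  intros H1 H2 x. unfold pdist.
  apply (continuity_pt_comp (fun t => (fst (P t) - fst q)^2 + (snd (P t) - snd q)^2) sqrt).
  - apply continuity_pt_plus; simpl;
    (apply continuity_pt_mult; [|apply continuity_pt_mult; [|apply continuity_pt_const; intros ? ?; auto]]);
    apply continuity_pt_minus; auto; apply continuity_pt_const; intros ? ?; auto.
  - apply continuity_pt_sqrt. apply Rplus_le_le_0_compat; apply pow2_ge_0.
Qed.


Definition rotp (ci : pt) (w1 w2 th : R) : pt :=
  (fst ci + (w1 * cos th - w2 * sin th), snd ci + (w1 * sin th + w2 * cos th)).

Lemma rotp_nsq ci w1 w2 th : nsq (rotp ci w1 w2 th) ci = w1^2 + w2^2.
Proof.
  unfold nsq, rotp; cbn [fst snd].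
  pose proof (sin2_cos2 th) as H. unfold Rsqr in H.
  transitivity ((w1^2+w2^2) * (sin th * sin th + cos th * cos th)); [ring|].
  rewrite H; ring.
Qed.

Lemma rotp_0 ci w1 w2 : rotp ci w1 w2 0 = (fst ci + w1, snd ci + w2).
Proof. unfold rotp. rewrite cos_0, sin_0. f_equal; ring. Qed.

Lemma cont_rotp ci w1 w2 :
  continuity (fun t => fst (rotp ci w1 w2 t)) /\ continuity (fun t => snd (rotp ci w1 w2 t)).
Proof.
  assert (K : forall a x, continuity_pt (fun _ => a) x) by (intros; apply continuity_pt_const; intros ? ?; auto).
  unfold rotp; cbn [fst snd]. split; intros x.
  - apply continuity_pt_plus; [apply K|].
    apply continuity_pt_minus; apply continuity_pt_mult; try apply K.
    apply continuity_cos. apply continuity_sin.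
  - apply continuity_pt_plus; [apply K|].
    apply continuity_pt_plus; apply continuity_pt_mult; try apply K.
    apply continuity_sin. apply continuity_cos.
Qed.

Lemma angle_exists C S : C^2 + S^2 = 1 -> exists th, cos th = C /\ sin th = S.
Proof.
  intros H.
  assert (HC : -1 <= C <= 1).
  { pose proof (pow2_ge_0 S). split; apply Rnot_lt_le; intro; nra. }
  assert (Hs : sqrt (1 - C²) = Rabs S).
  { apply sqrt_eq_sq; [apply Rabs_pos|]. rewrite RPow_abs, Rabs_right by (apply Rle_ge, pow2_ge_0). unfold Rsqr. lra. }
  destruct (Rle_dec 0 S).
  - exists (acos C). rewrite cos_acos, sin_acos by auto. rewrite Hs, Rabs_right by lra. auto.
  - exists (- acos C). rewrite cos_neg, sin_neg, cos_acos, sin_acos by auto.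
    rewrite Hs, Rabs_left by lra. split; [auto|ring].
Qed.

Lemma rot_exists w1 w2 e1 e2 : 0 < w1^2 + w2^2 -> e1^2 + e2^2 = w1^2 + w2^2 ->
  exists th, w1 * cos th - w2 * sin th = e1 /\ w1 * sin th + w2 * cos th = e2.
Proof.
  intros HN He. set (N := w1^2 + w2^2) in *.
  destruct (angle_exists ((w1*e1 + w2*e2)/N) ((w1*e2 - w2*e1)/N)) as [th [Hc Hs]].
  { transitivity (((w1^2+w2^2)*(e1^2+e2^2))/N^2). field; lra.
    rewrite He. fold N. field; lra. }
  exists th. rewrite Hc, Hs. split.
  - transitivity (e1 * (w1^2+w2^2)/N). field; lra. fold N; field; lra.
  - transitivity (e2 * (w1^2+w2^2)/N). field; lra. fold N; field; lra.
Qed.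

Lemma pdist_scale_conv (a b z : pt) s : 0 <= s <= 1 ->
  pdist (s * fst a + (1-s) * fst b, s * snd a + (1-s) * snd b) z <= s * pdist a z + (1-s) * pdist b z.
Proof.
  intros Hs. unfold pdist; cbn [fst snd].
  replace (s * fst a + (1 - s) * fst b - fst z) with (s*(fst a - fst z) + (1-s)*(fst b - fst z)) by ring.
  replace (s * snd a + (1 - s) * snd b - snd z) with (s*(snd a - snd z) + (1-s)*(snd b - snd z)) by ring.
  eapply Rle_trans; [apply norm_sub|].
  assert (forall t u v, 0 <= t -> sqrt ((t*u)^2 + (t*v)^2) = t * sqrt (u^2+v^2)).
  { intros t u v Ht. apply sqrt_eq_sq. apply Rmult_le_pos; auto; apply sqrt_pos.
    replace ((t * sqrt (u^2+v^2))^2) with (t^2 * (sqrt (u^2+v^2))^2) by ring.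
    rewrite pow2_sqrt by (apply Rplus_le_le_0_compat; apply pow2_ge_0). ring. }
  rewrite !H by lra. lra.
Qed.

Lemma disk_from_circle (ci z : pt) (w1 w2 Rz : R) :
  0 < w1^2 + w2^2 ->
  (forall th, pdist (rotp ci w1 w2 th) z <= Rz) ->
  forall x, nsq x ci <= w1^2 + w2^2 -> pdist x z <= Rz.
Proof.
  intros HN Hall x Hx. set (N := w1^2 + w2^2) in *.
  set (rho := pdist x ci).
  assert (Hrho : rho^2 = nsq x ci) by apply pdist_sq.
  assert (rho0 : 0 <= rho) by apply pdist_ge0.
  assert (HsN : (sqrt N)^2 = N) by (apply pow2_sqrt; lra).
  assert (sN0 : 0 < sqrt N) by (apply sqrt_lt_R0; lra).
  assert (Hrs : rho <= sqrt N) by (apply sq_le_imp; lra).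
  destruct (Req_dec rho 0) as [Hz|Hz].
  -
    unfold rho in Hz. apply pdist_zero in Hz. subst x.
    destruct (rot_exists w1 w2 (-w1) (-w2)) as [th Hth]; [auto| unfold N; ring|].
    pose proof (Hall 0) as H0. pose proof (Hall th) as H1.
    rewrite rotp_0 in H0. unfold rotp in H1. destruct Hth as [T1 T2]. rewrite T1, T2 in H1.
    pose proof (pdist_scale_conv (fst ci + w1, snd ci + w2) (fst ci + - w1, snd ci + - w2) z (1/2)) as Hc.
    cbn [fst snd] in Hc.
    replace (1 / 2 * (fst ci + w1) + (1 - 1 / 2) * (fst ci + - w1)) with (fst ci) in Hc by field.
    replace (1 / 2 * (snd ci + w2) + (1 - 1 / 2) * (snd ci + - w2)) with (snd ci) in Hc by field.
    rewrite <- surjective_pairing in Hc. lra.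
  - assert (rp : 0 < rho) by lra.
    set (k := sqrt N / rho).
    set (e1 := k * (fst x - fst ci)). set (e2 := k * (snd x - snd ci)).
    assert (He : e1^2 + e2^2 = N).
    { unfold e1, e2. transitivity (k^2 * nsq x ci). unfold nsq; ring.
      rewrite <- Hrho. unfold k. field_simplify; [|lra]. rewrite HsN. field_simplify; lra. }
    destruct (rot_exists w1 w2 e1 e2) as [th1 [A1 A2]]; [auto|exact He|].
    destruct (rot_exists w1 w2 (-e1) (-e2)) as [th2 [B1 B2]]; [auto|transitivity (e1^2+e2^2); [ring|exact He]|].
    pose proof (Hall th1) as H1. pose proof (Hall th2) as H2.
    unfold rotp in H1, H2. rewrite A1, A2 in H1. rewrite B1, B2 in H2.
    set (s := (1 + rho / sqrt N) / 2).
    assert (Hs : 0 <= s <= 1).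
    { unfold s. assert (0 <= rho / sqrt N <= 1).
      { split. apply div_nonneg; lra. apply Rmult_le_reg_r with (sqrt N); auto. field_simplify; lra. }
      lra. }
    pose proof (pdist_scale_conv (fst ci + e1, snd ci + e2) (fst ci + - e1, snd ci + - e2) z s Hs) as Hc.
    cbn [fst snd] in Hc.
    replace (s * (fst ci + e1) + (1 - s) * (fst ci + - e1)) with (fst x) in Hc.
    replace (s * (snd ci + e2) + (1 - s) * (snd ci + - e2)) with (snd x) in Hc.
    rewrite <- surjective_pairing in Hc.
    + eapply Rle_trans; [apply Hc|]. nra.
    + unfold s, e2, k. field. split; lra.
    + unfold s, e1, k. field. split; lra.
Qed.


Lemma cross_anti ci cj d : cross_n cj ci d = - cross_n ci cj d.
Proof. unfold cross_n. ring. Qed.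

Lemma pdist_ge_dx a b : fst a - fst b <= pdist a b.
Proof.
  destruct (Rle_dec (fst a - fst b) 0). pose proof (pdist_ge0 a b); lra.
  apply sq_le_sqrt; [lra|]. pose proof (pow2_ge_0 (snd a - snd b)). lra.
Qed.

Section Part1.
Variables (m : nat) (c : nat -> pt) (r : nat -> R) (lam : R).
Hypotheses (Hm : (3 <= m)%nat) (Hr : forall i, (i < m)%nat -> 0 < r i)
  (Hne : forall i j, (i < m)%nat -> (j < m)%nat -> i <> j -> (c i, r i) <> (c j, r j))
  (Hlam : 0 < lam)
  (Hpair : forall i j, (i < m)%nat -> (j < m)%nat -> i <> j -> pdist (c i) (c j) <= lam * (r i + r j)).

Lemma dij_ok i j : (i < m)%nat -> (j < m)%nat -> i <> j ->
  dij_spec (c i) (c j) (r i) (r j) lam (dij c r lam i j).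
Proof. intros. unfold dij. apply epsilon_spec. apply spec_exists; auto. Qed.

Lemma dij_in i j : (i < m)%nat -> (j < m)%nat -> i <> j ->
  pdist (dij c r lam i j) (c i) <= lam * r i /\ pdist (dij c r lam i j) (c j) <= lam * r j.
Proof. intros. apply spec_in_disks with (rj := r j) (cj := c j) (ci := c i); auto. apply dij_ok; auto. Qed.

Lemma circ_point_is_d i k q : (i < m)%nat -> (k < m)%nat -> i <> k ->
  pdist q (c i) = lam * r i -> pdist q (c k) = lam * r k ->
  q = dij c r lam i k \/ q = dij c r lam k i.
Proof.
  intros Hi Hk Hik Q1 Q2.
  assert (Hcc : c i <> c k).
  { intros E. rewrite E in Q1. rewrite Q1 in Q2. apply (Hne i k); auto. rewrite E. f_equal.
    apply Rmult_eq_reg_l with lam; lra. }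
  destruct (Rle_dec 0 (cross_n (c i) (c k) q)) as [Hc|Hc].
  - left. destruct (spec_on_circles (c i) (c k) (r i) (r k) lam _ q (dij_ok i k Hi Hk Hik) Q1 Q2) as [D1 [D2 D3]].
    apply (circ_unique (c i) (c k) (lam * r i) (lam * r k)); auto.
  - right. assert (Hc' : 0 <= cross_n (c k) (c i) q) by (rewrite cross_anti; lra).
    destruct (spec_on_circles (c k) (c i) (r k) (r i) lam _ q (dij_ok k i Hk Hi (not_eq_sym Hik)) Q2 Q1) as [D1 [D2 D3]].
    apply (circ_unique (c k) (c i) (lam * r k) (lam * r i)); auto.
Qed.

Definition Fpair (ij : nat * nat) : R :=
  let i := fst ij in let j := snd ij in
  lmin (map (fun k => lam * r k - pdist (dij c r lam i j) (c k))
            (filter (fun k => andb (negb (Nat.eqb k i)) (negb (Nat.eqb k j))) (seq 0 m))).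

Lemma rho_eq : rhoM m c r lam = lmax (map Fpair (idx_pairs m)).
Proof. reflexivity. Qed.

Lemma rho_ge0_of_pair i j : (i < m)%nat -> (j < m)%nat -> i <> j ->
  (forall k, (k < m)%nat -> k <> i -> k <> j -> pdist (dij c r lam i j) (c k) <= lam * r k) ->
  0 <= rhoM m c r lam.
Proof.
  intros Hi Hj Hij H. rewrite rho_eq.
  apply Rle_trans with (Fpair (i, j)).
  - unfold Fpair; cbn [fst snd]. apply lmin_ge0. intros x Hx.
    apply in_map_iff in Hx. destruct Hx as [k [E Hk]]. apply in_filt in Hk. subst x.
    destruct Hk as [K1 [K2 K3]]. specialize (H k K1 K2 K3). lra.
  - apply lmax_ge. apply in_map. apply in_idx_pairs. auto.
Qed.

Lemma rho_to_point : 0 <= rhoM m c r lam ->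
  exists p, forall i, (i < m)%nat -> pdist p (c i) <= lam * r i.
Proof.
  intros H. rewrite rho_eq in H.
  apply lmax_ge0_ex in H.
  2:{ intros E. assert (In (Fpair (0%nat,1%nat)) (map Fpair (idx_pairs m))).
      { apply in_map, in_idx_pairs. lia. } rewrite E in H0; auto. }
  destruct H as [x [Hx Hx0]]. apply in_map_iff in Hx. destruct Hx as [[i j] [E Hij]].
  apply in_idx_pairs in Hij. destruct Hij as [Hi [Hj Hij]].
  exists (dij c r lam i j). intros k Hk.
  destruct (Nat.eq_dec k i); [subst; apply dij_in; auto|].
  destruct (Nat.eq_dec k j); [subst; apply dij_in; auto|].
  subst x. unfold Fpair in Hx0; cbn [fst snd] in Hx0.
  assert (lmin (map (fun k => lam * r k - pdist (dij c r lam i j) (c k))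
            (filter (fun k => andb (negb (Nat.eqb k i)) (negb (Nat.eqb k j))) (seq 0 m)))
          <= lam * r k - pdist (dij c r lam i j) (c k)).
  { apply lmin_le. apply in_map with (f := fun k => lam * r k - pdist (dij c r lam i j) (c k)).
    apply in_filt; auto. }
  lra.
Qed.

Lemma cont_term (P : R -> pt) k :
  continuity (fun t => fst (P t)) -> continuity (fun t => snd (P t)) ->
  continuity (fun t => lam * r k - pdist (P t) (c k)).
Proof.
  intros H1 H2 x. apply continuity_pt_minus. apply continuity_pt_const; intros ? ?; auto.
  apply cont_pdist; auto.
Qed.

Lemma ray_point (p : pt) : (forall i, (i < m)%nat -> pdist p (c i) <= lam * r i) ->
  exists i q, (i < m)%nat /\ pdist q (c i) = lam * r i /\
    forall k, (k < m)%nat -> pdist q (c k) <= lam * r k.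
Proof.
  intros Hp.
  set (P := fun t : R => (fst p + t, snd p)).
  set (G := fun t => lmin (map (fun k => lam * r k - pdist (P t) (c k)) (seq 0 m))).
  assert (HG : continuity G).
  { apply cont_lmin. intros k. apply cont_term; unfold P; cbn [fst snd]; intros x.
    apply continuity_pt_plus; [apply continuity_pt_const; intros ? ?; auto|apply derivable_continuous_pt; apply derivable_pt_id].
    apply continuity_pt_const; intros ? ?; auto. }
  assert (G0 : 0 <= G 0).
  { unfold G. apply lmin_ge0. intros x Hx. apply in_map_iff in Hx. destruct Hx as [k [E Hk]].
    apply in_seq in Hk. subst x. unfold P. rewrite Rplus_0_r, <- surjective_pairing.
    specialize (Hp k ltac:(lia)). lra. }
  assert (Hr0 : 0 < r 0%nat) by (apply Hr; lia).
  set (T := Rabs (fst p - fst (c 0%nat)) + lam * r 0%nat + 1).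
  assert (GT : G T < 0).
  { unfold G. eapply Rle_lt_trans. apply lmin_le. apply in_map. apply (proj2 (in_seq m 0 0)). lia.
    assert (fst (P T) - fst (c 0%nat) <= pdist (P T) (c 0%nat)) by apply pdist_ge_dx.
    assert (fst (P T) = fst p + T) by reflexivity.
    pose proof (Rle_abs (fst p - fst (c 0%nat))). pose proof (Rabs_pos (fst p - fst (c 0%nat))).
    assert (T = Rabs (fst p - fst (c 0%nat)) + lam * r 0%nat + 1) by reflexivity.
    clearbody T. clearbody P. assert (- (fst p - fst (c 0%nat)) <= Rabs (fst p - fst (c 0%nat))) by (unfold Rabs; destruct (Rcase_abs _); lra). lra. }
  assert (T0 : 0 <= T) by (unfold T; pose proof (Rabs_pos (fst p - fst (c 0%nat))); nra).
  destruct (IVT_cor G 0 T HG T0) as [z [Hz Gz]]. { nra. }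
  assert (Hne0 : map (fun k => lam * r k - pdist (P z) (c k)) (seq 0 m) <> nil).
  { destruct m; [lia|]. simpl. congruence. }
  pose proof (lmin_in _ Hne0) as Hin. fold (G z) in Hin. rewrite Gz in Hin.
  apply in_map_iff in Hin. destruct Hin as [i [Ei Hi]]. apply in_seq in Hi.
  exists i, (P z). split; [lia|]. split; [lra|].
  intros k Hk. assert (G z <= lam * r k - pdist (P z) (c k)).
  { apply lmin_le. apply (in_map (fun k => lam * r k - pdist (P z) (c k))). apply in_seq. lia. }
  lra.
Qed.

Lemma circle_step i q : (i < m)%nat -> pdist q (c i) = lam * r i ->
  (forall k, (k < m)%nat -> pdist q (c k) <= lam * r k) -> 0 <= rhoM m c r lam.
Proof.
  intros Hi Hq Hk.
  set (w1 := fst q - fst (c i)). set (w2 := snd q - snd (c i)).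
  assert (HN : w1^2 + w2^2 = (lam * r i)^2).
  { rewrite <- Hq, pdist_sq. reflexivity. }
  assert (Hri : 0 < r i) by auto.
  assert (HNp : 0 < w1^2 + w2^2) by (rewrite HN; apply pow_lt; apply Rmult_lt_0_compat; auto).
  set (g := fun th => rotp (c i) w1 w2 th).
  assert (Hg : forall th, pdist (g th) (c i) = lam * r i).
  { intros th. apply pdist_eq_iff. assert (0 < r i) by auto; nra. unfold g. rewrite rotp_nsq. auto. }
  assert (Hg0 : g 0 = q).
  { unfold g. rewrite rotp_0. unfold w1, w2. rewrite (surjective_pairing q) at 3. f_equal; ring. }
  set (L := filter (fun k => negb (Nat.eqb k i)) (seq 0 m)).
  assert (HL : forall k, In k L <-> (k < m /\ k <> i)%nat).
  { intros k. unfold L. rewrite filter_In, in_seq, Bool.negb_true_iff, Nat.eqb_neq. lia. }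
  set (H := fun th => lmin (map (fun k => lam * r k - pdist (g th) (c k)) L)).
  assert (HH : continuity H).
  { apply cont_lmin. intros k. apply cont_term; apply cont_rotp. }
  assert (H0 : 0 <= H 0).
  { unfold H. rewrite Hg0. apply lmin_ge0. intros x Hx. apply in_map_iff in Hx.
    destruct Hx as [k [E Hk']]. apply HL in Hk'. subst x. specialize (Hk k ltac:(lia)). lra. }
  set (k0 := if Nat.eqb i 0 then 1%nat else 0%nat).
  assert (Hk0 : (k0 < m /\ k0 <> i)%nat).
  { unfold k0. destruct (Nat.eqb_spec i 0); lia. }
  assert (HLne : map (fun k => lam * r k - pdist (g 0) (c k)) L <> nil).
  { assert (In k0 L) by (apply HL; auto). destruct L; [contradiction|]. simpl; congruence. }
  destruct (classic (exists th, H th < 0)) as [[th1 Hth1]|Hall].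
  - assert (Hz : exists z, H z = 0).
    { destruct (Rle_dec 0 th1).
      - destruct (IVT_cor H 0 th1 HH r0) as [z [_ Hz]]. nra. eauto.
      - destruct (IVT_cor H th1 0 HH) as [z [_ Hz]]. lra. nra. eauto. }
    destruct Hz as [z Hz].
    assert (HLz : map (fun k => lam * r k - pdist (g z) (c k)) L <> nil).
    { assert (In k0 L) by (apply HL; auto). destruct L; [contradiction|]. simpl; congruence. }
    pose proof (lmin_in _ HLz) as Hin. fold (H z) in Hin. rewrite Hz in Hin.
    apply in_map_iff in Hin. destruct Hin as [k [Ek Hk']]. apply HL in Hk'. destruct Hk' as [Hkm Hki].
    assert (Hallz : forall l, (l < m)%nat -> l <> i -> pdist (g z) (c l) <= lam * r l).
    { intros l Hl Hli. assert (H z <= lam * r l - pdist (g z) (c l)).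
      { apply lmin_le. apply (in_map (fun k => lam * r k - pdist (g z) (c k))). apply HL; auto. } lra. }
    destruct (circ_point_is_d i k (g z)) as [E|E]; auto; try lra.
    + apply rho_ge0_of_pair with i k; auto. intros l Hl Hl1 Hl2. rewrite <- E. auto.
    + apply rho_ge0_of_pair with k i; auto. intros l Hl Hl1 Hl2. rewrite <- E. auto.
  - assert (Hcirc : forall l, (l < m)%nat -> l <> i -> forall th, pdist (g th) (c l) <= lam * r l).
    { intros l Hl Hli th. assert (0 <= H th) by (apply Rnot_lt_le; intro; apply Hall; eauto).
      assert (H th <= lam * r l - pdist (g th) (c l)).
      { apply lmin_le. apply (in_map (fun k => lam * r k - pdist (g th) (c k))). apply HL; auto. } lra. }
    destruct Hk0 as [Hk0m Hk0i].
    apply rho_ge0_of_pair with i k0; auto.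
    intros l Hl Hl1 Hl2.
    apply (disk_from_circle (c i) (c l) w1 w2); [auto| intros th; apply Hcirc; auto|].
    + rewrite HN. destruct (dij_in i k0) as [D1 _]; auto.
      rewrite <- pdist_sq. pose proof (pdist_ge0 (dij c r lam i k0) (c i)).
      assert (0 < r i) by auto. nra.
Qed.

Theorem part1 : (exists p, forall i, (i < m)%nat -> pdist p (c i) <= lam * r i) <->
  0 <= rhoM m c r lam.
Proof.
  split.
  - intros [p Hp]. destruct (ray_point p Hp) as [i [q [Hi [Hq Hk]]]].
    apply circle_step with i q; auto.
  - apply rho_to_point.
Qed.
End Part1.


Lemma scalar_key g p q : 1 + 2*g*p*q - g^2 - p^2 - q^2 = 0 -> -1/2 < g -> g <= p -> g <= q -> 0 < p + q.
Proof.
intros H Hg Hp Hq.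
destruct (Rlt_dec 0 (p+q)) as [|n]; auto. apply Rnot_lt_le in n. exfalso.
assert (g <= 0) by lra.
assert (p <= -g) by lra. assert (q <= -g) by lra.
assert (p^2 <= g^2) by nra. assert (q^2 <= g^2) by nra.
assert (p*q <= g^2).
{ assert ((p*q)^2 <= (g^2)^2) by (replace ((p*q)^2) with (p^2*q^2) by ring; replace ((g^2)^2) with (g^2*g^2) by ring; apply Rmult_le_compat; try apply pow2_ge_0; auto).
  destruct (Rle_dec (p*q) (g^2)); auto. apply Rnot_le_lt in n0. nra. }
assert (g*(p*q) >= g*g^2) by nra.
assert (0 < (1+2*g)*(1-g)^2) by (apply Rmult_lt_0_compat; [lra| assert (0 < 1 - g) by lra; apply pow_lt; lra]).
nra.
Qed.

Lemma vec_key a1 a2 b1 b2 s1 s2 :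
  a1^2 + a2^2 = 1 -> b1^2 + b2^2 = 1 -> s1^2 + s2^2 = 1 ->
  -1/2 < a1*b1 + a2*b2 -> a1*b1 + a2*b2 <= a1*s1 + a2*s2 -> a1*b1 + a2*b2 <= b1*s1 + b2*s2 ->
  0 < (a1*s1 + a2*s2) + (b1*s1 + b2*s2).
Proof.
  intros Ha Hb Hs H1 H2 H3. apply scalar_key with (a1*b1+a2*b2); auto.
  assert (E : (a1^2+a2^2)*(b1^2+b2^2)*(s1^2+s2^2) + 2*(a1*b1+a2*b2)*(a1*s1+a2*s2)*(b1*s1+b2*s2)
    - (s1^2+s2^2)*(a1*b1+a2*b2)^2 - (b1^2+b2^2)*(a1*s1+a2*s2)^2 - (a1^2+a2^2)*(b1*s1+b2*s2)^2 = 0) by ring.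
  rewrite Ha, Hb, Hs in E. lra.
Qed.

Lemma argmin_ex {A} (l : list A) (F : A -> R) : l <> nil -> exists x, In x l /\ forall y, In y l -> F x <= F y.
Proof.
  induction l as [|a l IH]; [congruence|]. intros _.
  destruct l as [|b l'].
  - exists a. split; [left; auto|]. intros y [E|[]]; subst; lra.
  - destruct IH as [x [Hx Hmin]]; [congruence|].
    destruct (Rle_dec (F a) (F x)).
    + exists a. split; [left; auto|]. intros y [E|E]; [subst; lra|]. specialize (Hmin y E); lra.
    + exists x. split; [right; auto|]. intros y [E|E]; [subst; lra|]. auto.
Qed.

Lemma lip_cont (g : R -> R) L : 0 <= L -> (forall x y, g y - g x <= L * Rabs (y - x)) -> continuity g.
Proof.
  intros HL H x. unfold continuity_pt, continue_in, limit1_in, limit_in. intros eps Heps.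
  exists (eps / (L + 1)). split. apply Rdiv_lt_0_compat; lra.
  intros y [_ Hy]. simpl in *. unfold Rdist in *.
  assert (Habs : Rabs (g y - g x) <= L * Rabs (y - x)).
  { apply Rabs_le. split.
    - pose proof (H y x). rewrite Rabs_minus_sym in H0. lra.
    - apply H. }
  eapply Rle_lt_trans; [apply Habs|].
  apply Rle_lt_trans with ((L+1) * Rabs (y - x)). pose proof (Rabs_pos (y - x)); nra.
  apply Rmult_lt_reg_l with (/ (L+1)). apply Rinv_0_lt_compat; lra.
  replace (/ (L + 1) * ((L + 1) * Rabs (y - x))) with (Rabs (y - x)) by (field; lra).
  replace (/ (L + 1) * eps) with (eps / (L+1)) by (unfold Rdiv; ring). auto.
Qed.

Lemma Rmax_lip a b a' b' e : a' - a <= e -> b' - b <= e -> Rmax a' b' - Rmax a b <= e.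
Proof. intros. unfold Rmax. destruct (Rle_dec a' b'), (Rle_dec a b); lra. Qed.

Lemma lmax_lip {A} (l : list A) (F G : A -> R) e : 0 <= e ->
  (forall a, In a l -> G a - F a <= e) -> lmax (map G l) - lmax (map F l) <= e.
Proof.
  intros He. destruct l as [|a0 l]; simpl; intros H.
  - lra.
  - assert (H0 : G a0 - F a0 <= e) by auto.
    assert (Hl : forall a, In a l -> G a - F a <= e) by auto.
    clear H. induction l as [|a l IH]; simpl; auto.
    apply Rmax_lip; [apply Hl; simpl; auto| apply IH; intros; apply Hl; simpl; auto].
Qed.

Lemma Rabs_le_inv x B : Rabs x <= B -> -B <= x <= B.
Proof. unfold Rabs; destruct (Rcase_abs x); lra. Qed.

Lemma abs_sq z : Rabs z ^ 2 = z ^ 2.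
Proof. rewrite RPow_abs. apply Rabs_right. apply Rle_ge, pow2_ge_0. Qed.

Lemma pdist_ge_absx a b : Rabs (fst a - fst b) <= pdist a b.
Proof. apply sq_le_sqrt. apply Rabs_pos. rewrite abs_sq. pose proof (pow2_ge_0 (snd a - snd b)). lra. Qed.
Lemma pdist_ge_absy a b : Rabs (snd a - snd b) <= pdist a b.
Proof. apply sq_le_sqrt. apply Rabs_pos. rewrite abs_sq. pose proof (pow2_ge_0 (fst a - fst b)). lra. Qed.

Lemma delta_all (P : nat -> R -> Prop) n :
  (forall s, (s < n)%nat -> exists d, 0 < d /\ forall t, 0 < t < d -> P s t) ->
  exists d, 0 < d /\ forall t, 0 < t < d -> forall s, (s < n)%nat -> P s t.
Proof.
  induction n as [|n IH]; intros H.
  - exists 1. split; [lra|]. intros; lia.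
  - destruct IH as [d1 [Hd1 H1]]. { intros s Hs; apply H; lia. }
    destruct (H n) as [d2 [Hd2 H2]]; [lia|].
    exists (Rmin d1 d2). split. apply Rmin_glb_lt; auto.
    intros t Ht s Hs. pose proof (Rmin_l d1 d2). pose proof (Rmin_r d1 d2).
    destruct (Nat.eq_dec s n).
    + subst; apply H2; lra.
    + apply H1; [lra|lia].
Qed.

Section Jung.
Variables (m : nat) (c : nat -> pt) (r : nat -> R).
Hypotheses (Hm1 : (1 <= m)%nat) (Hr : forall i, (i < m)%nat -> 0 < r i).

Definition fmax (p : pt) := lmax (map (fun i => pdist p (c i) / r i) (seq 0 m)).

Lemma fmax_ge i p : (i < m)%nat -> pdist p (c i) / r i <= fmax p.
Proof. intros Hi. apply lmax_ge. apply (in_map (fun i => pdist p (c i) / r i)). apply in_seq; lia. Qed.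

Lemma fmax_lt p mu : (forall i, (i < m)%nat -> pdist p (c i) / r i < mu) -> fmax p < mu.
Proof.
  intros H. apply lmax_lt.
  - destruct m; [lia|]. simpl; congruence.
  - intros x Hx. apply in_map_iff in Hx. destruct Hx as [i [E Hi]]. apply in_seq in Hi. subst; apply H; lia.
Qed.

Lemma fmax_cont_y x : continuity (fun y => fmax (x, y)).
Proof.
  unfold fmax. apply cont_lmax. intros i y.
  apply continuity_pt_mult; [|apply continuity_pt_const; intros ? ?; auto].
  apply (cont_pdist (fun y => (x, y))); cbn [fst snd]; intros z.
  apply continuity_pt_const; intros ? ?; auto.
  apply derivable_continuous_pt; apply derivable_pt_id.
Qed.

Definition Lc := lmax (map (fun i => / r i) (seq 0 m)).

Lemma Lc_pos : 0 <= Lc.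
Proof.
  apply Rle_trans with (/ r 0%nat). left; apply Rinv_0_lt_compat, Hr; lia.
  apply lmax_ge. apply (in_map (fun i => / r i)). apply in_seq; lia.
Qed.

Lemma pdist_x x x' y : pdist (x', y) (x, y) = Rabs (x' - x).
Proof. apply sqrt_eq_sq. apply Rabs_pos. cbn [fst snd]. rewrite abs_sq. ring. Qed.

Lemma fmax_lip x x' y : fmax (x', y) - fmax (x, y) <= Lc * Rabs (x' - x).
Proof.
  unfold fmax. apply lmax_lip. apply Rmult_le_pos; [apply Lc_pos|apply Rabs_pos].
  intros i Hi. apply in_seq in Hi.
  assert (Hri : 0 < r i) by (apply Hr; lia).
  pose proof (pdist_tri (x', y) (x, y) (c i)). rewrite pdist_x in H.
  assert (/ r i <= Lc) by (apply lmax_ge; apply (in_map (fun i => / r i)); apply in_seq; lia).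
  replace (pdist (x', y) (c i) / r i - pdist (x, y) (c i) / r i) with
    ((pdist (x', y) (c i) - pdist (x, y) (c i)) * / r i) by (field; lra).
  apply Rle_trans with (Rabs (x' - x) * / r i).
  apply Rmult_le_compat_r. left; apply Rinv_0_lt_compat; auto. lra.
  rewrite Rmult_comm. apply Rmult_le_compat_r. apply Rabs_pos. auto.
Qed.

Lemma fmin_exists : exists ps, forall q, fmax ps <= fmax q.
Proof.
  set (f00 := fmax (0, 0)).
  assert (Hr0 : 0 < r 0%nat) by (apply Hr; lia).
  assert (Hf00 : 0 <= f00).
  { apply Rle_trans with (pdist (0,0) (c 0%nat) / r 0%nat). apply div_nonneg; auto; apply pdist_ge0.
    apply fmax_ge; lia. }
  set (B := Rabs (fst (c 0%nat)) + Rabs (snd (c 0%nat)) + r 0%nat * (f00 + 1)).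
  assert (HB : 0 <= B) by (unfold B; pose proof (Rabs_pos (fst (c 0%nat))); pose proof (Rabs_pos (snd (c 0%nat))); nra).
  set (Py := fun x y => -B <= y <= B /\ forall y', -B <= y' <= B -> fmax (x, y) <= fmax (x, y')).
  assert (HPy : forall x, exists y, Py x y).
  { intros x. destruct (continuity_ab_min (fun y => fmax (x, y)) (-B) B) as [y [H1 H2]]; [lra| |].
    intros; apply fmax_cont_y. exists y. split; auto. }
  set (ys := fun x => epsilon (inhabits 0) (Py x)).
  assert (Hys : forall x, Py x (ys x)) by (intros; apply epsilon_spec; auto).
  set (Gf := fun x => fmax (x, ys x)).
  assert (HG : continuity Gf).
  { apply lip_cont with Lc. apply Lc_pos. intros x x'. unfold Gf.
    destruct (Hys x') as [_ H1]. destruct (Hys x) as [H2 _].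
    pose proof (H1 (ys x) H2). pose proof (fmax_lip x x' (ys x)). lra. }
  destruct (continuity_ab_min Gf (-B) B) as [xs [H1 H2]]; [lra| intros; apply HG |].
  exists (xs, ys xs).
  assert (Hbox : forall q, Rabs (fst q) <= B -> Rabs (snd q) <= B -> fmax (xs, ys xs) <= fmax q).
  { intros q Q1 Q2. apply Rabs_le_inv in Q1. apply Rabs_le_inv in Q2.
    apply Rle_trans with (Gf (fst q)). apply H1; lra.
    unfold Gf. destruct (Hys (fst q)) as [_ H3]. replace (fmax q) with (fmax (fst q, snd q)) by (rewrite <- surjective_pairing; auto). apply H3; lra. }
  intros q.
  destruct (Rle_dec (Rabs (fst q)) B) as [Q1|Q1]; [destruct (Rle_dec (Rabs (snd q)) B) as [Q2|Q2]|].
  - apply Hbox; auto.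
  - apply Rle_trans with f00. apply Hbox; cbn [fst snd]; rewrite Rabs_R0; auto.
    apply Rle_trans with (pdist q (c 0%nat) / r 0%nat); [|apply fmax_ge; lia].
    pose proof (pdist_ge_absy q (c 0%nat)).
    pose proof (Rabs_triang_inv (snd q) (snd (c 0%nat))).
    apply Rmult_le_reg_r with (r 0%nat); auto. unfold Rdiv. rewrite Rmult_assoc, Rinv_l by lra.
    unfold B in Q2. pose proof (Rabs_pos (fst (c 0%nat))). nra.
  - apply Rle_trans with f00. apply Hbox; cbn [fst snd]; rewrite Rabs_R0; auto.
    apply Rle_trans with (pdist q (c 0%nat) / r 0%nat); [|apply fmax_ge; lia].
    pose proof (pdist_ge_absx q (c 0%nat)).
    pose proof (Rabs_triang_inv (fst q) (fst (c 0%nat))).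
    apply Rmult_le_reg_r with (r 0%nat); auto. unfold Rdiv. rewrite Rmult_assoc, Rinv_l by lra.
    unfold B in Q1. pose proof (Rabs_pos (snd (c 0%nat))). nra.
Qed.
End Jung.


Section Jung2.
Variables (m : nat) (c : nat -> pt) (r : nat -> R) (nu : R).
Hypotheses (Hm1 : (1 <= m)%nat) (Hr : forall i, (i < m)%nat -> 0 < r i) (Hnu : 0 < nu)
  (Hpn : forall i j, (i < m)%nat -> (j < m)%nat -> i <> j -> pdist (c i) (c j) <= nu * (r i + r j)).

Lemma descent (ps : pt) (mu v1 v2 : R) :
  0 < mu ->
  (forall s, (s < m)%nat -> pdist ps (c s) <= mu * r s) ->
  (forall s, (s < m)%nat -> pdist ps (c s) = mu * r s ->
     (fst ps - fst (c s)) * v1 + (snd ps - snd (c s)) * v2 < 0) ->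
  exists q, fmax m c r q < mu.
Proof.
  intros Hmu Hle Hv.
  destruct (delta_all (fun s t => pdist (fst ps + t * v1, snd ps + t * v2) (c s) < mu * r s) m)
    as [d [Hd Hall]].
  - intros s Hs.
    assert (Hrs : 0 < r s) by auto.
    assert (HR : 0 <= mu * r s) by nra.
    set (u1 := fst ps - fst (c s)). set (u2 := snd ps - snd (c s)).
    set (N := u1^2 + u2^2). set (D := u1*v1 + u2*v2). set (V := v1^2 + v2^2).
    assert (HV : 0 <= V) by (unfold V; pose proof (pow2_ge_0 v1); pose proof (pow2_ge_0 v2); lra).
    assert (Hexp : forall t, nsq (fst ps + t * v1, snd ps + t * v2) (c s) = N + 2*t*D + t^2*V).
    { intros t. unfold nsq, N, D, V, u1, u2; cbn [fst snd]. ring. }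
    assert (HN : N = nsq ps (c s)) by reflexivity.
    destruct (Req_dec (pdist ps (c s)) (mu * r s)) as [Ha|Ha].
    + assert (HD : D < 0) by (apply Hv; auto).
      assert (HNe : N = (mu * r s)^2) by (rewrite HN; apply pdist_eq_iff; auto).
      exists (- D / (V + 1)). split. apply Rdiv_lt_0_compat; lra.
      intros t [Ht1 Ht2]. apply pdist_lt_iff; auto. rewrite Hexp, HNe.
      assert (t * (V + 1) < - D).
      { apply Rmult_lt_reg_r with (/ (V+1)). apply Rinv_0_lt_compat; lra.
        replace (t * (V + 1) * / (V + 1)) with t by (field; lra). auto. }
      assert (t * V <= t * (V+1)) by nra.
      assert (2*t*D + t^2*V = t * (2*D + t*V)) by ring. nra.
    + assert (Hlt : pdist ps (c s) < mu * r s) by (specialize (Hle s Hs); lra).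
      assert (HNl : N < (mu * r s)^2) by (rewrite HN; apply pdist_lt_iff; auto).
      set (gap := (mu * r s)^2 - N).
      set (K := 2 * Rabs D + V + 1).
      assert (HK : 0 < K) by (unfold K; pose proof (Rabs_pos D); lra).
      exists (Rmin 1 (gap / K)). split. apply Rmin_glb_lt; [lra|]. apply Rdiv_lt_0_compat; unfold gap; lra.
      intros t [Ht1 Ht2]. apply pdist_lt_iff; auto. rewrite Hexp.
      pose proof (Rmin_l 1 (gap / K)). pose proof (Rmin_r 1 (gap / K)).
      assert (t * K < gap).
      { apply Rmult_lt_reg_r with (/ K). apply Rinv_0_lt_compat; lra.
        replace (t * K * / K) with t by (field; lra). unfold Rdiv in *. lra. }
      assert (t^2 * V <= t * V) by (assert (t^2 <= t) by nra; nra).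
      assert (D <= Rabs D) by apply Rle_abs.
      assert (2*t*D <= 2*t*Rabs D) by nra.
      unfold K, gap in *. nra.
  - exists (fst ps + (d/2) * v1, snd ps + (d/2) * v2).
    apply fmax_lt; auto. intros i Hi.
    assert (Hri : 0 < r i) by auto.
    specialize (Hall (d/2) ltac:(lra) i Hi).
    apply Rmult_lt_reg_r with (r i); auto. unfold Rdiv. rewrite Rmult_assoc, Rinv_l by lra. lra.
Qed.
End Jung2.


Section Jung3.
Variables (m : nat) (c : nat -> pt) (r : nat -> R) (nu : R).
Hypotheses (Hm1 : (1 <= m)%nat) (Hr : forall i, (i < m)%nat -> 0 < r i) (Hnu : 0 < nu)
  (Hpn : forall i j, (i < m)%nat -> (j < m)%nat -> i <> j -> pdist (c i) (c j) <= nu * (r i + r j)).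

Lemma direction (ps : pt) (mu : R) :
  0 < mu -> 4 * nu^2 < 3 * mu^2 ->
  exists v1 v2, forall s, (s < m)%nat -> pdist ps (c s) = mu * r s ->
     (fst ps - fst (c s)) * v1 + (snd ps - snd (c s)) * v2 < 0.
Proof.
  intros Hmu Hnm.
  set (act := fun s => (s < m)%nat /\ pdist ps (c s) = mu * r s).
  set (ab := fun s => if Req_EM_T (pdist ps (c s)) (mu * r s) then Nat.ltb s m else false).
  assert (Hab : forall s, ab s = true <-> act s).
  { intros s. unfold ab, act. destruct (Req_EM_T _ _); rewrite ?Nat.ltb_lt; intuition congruence. }
  set (PL := filter (fun ij => andb (ab (fst ij)) (ab (snd ij))) (list_prod (seq 0 m) (seq 0 m))).
  assert (HPL : forall i j, In (i, j) PL <-> act i /\ act j).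
  { intros i j. unfold PL. rewrite filter_In, in_prod_iff, !in_seq, Bool.andb_true_iff, !Hab.
    cbn [fst snd]. unfold act. split; [tauto|]. intros [[? ?] [? ?]]. repeat split; auto; lia. }
  set (a1 := fun s => (fst ps - fst (c s)) / (mu * r s)).
  set (a2 := fun s => (snd ps - snd (c s)) / (mu * r s)).
  assert (Ha : forall s, (s < m)%nat -> fst ps - fst (c s) = mu * r s * a1 s /\ snd ps - snd (c s) = mu * r s * a2 s).
  { intros s Hs. assert (0 < r s) by auto. unfold a1, a2. split; field; nra. }
  assert (Hunit : forall s, act s -> a1 s ^2 + a2 s ^2 = 1).
  { intros s [Hs E]. assert (0 < r s) by auto. apply pdist_eq_iff in E; [|nra].
    unfold nsq in E. destruct (Ha s Hs) as [E1 E2]. rewrite E1, E2 in E.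
    assert (0 < (mu * r s)^2) by (apply pow_lt; nra).
    apply Rmult_eq_reg_l with ((mu * r s)^2); [|lra]. transitivity ((mu * r s * a1 s)^2 + (mu * r s * a2 s)^2); [ring|]. rewrite E; ring. }
  set (dt := fun ij : nat * nat => a1 (fst ij) * a1 (snd ij) + a2 (fst ij) * a2 (snd ij)).
  assert (Hpair : forall i j, act i -> act j -> -1/2 < dt (i, j)).
  { intros i j Hi Hj. unfold dt; cbn [fst snd].
    destruct (Nat.eq_dec i j) as [E|E].
    - subst. replace (a1 j * a1 j + a2 j * a2 j) with (a1 j ^2 + a2 j ^2) by ring. rewrite Hunit; auto; lra.
    - destruct Hi as [Hi Ei], Hj as [Hj Ej].
      assert (ri0 : 0 < r i) by auto. assert (rj0 : 0 < r j) by auto.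
      pose proof (Hpn i j Hi Hj E) as Hp.
      apply pdist_le_iff in Hp; [|nra].
      unfold nsq in Hp. destruct (Ha i Hi) as [Ei1 Ei2]. destruct (Ha j Hj) as [Ej1 Ej2].
      replace (fst (c i) - fst (c j)) with ((fst ps - fst (c j)) - (fst ps - fst (c i))) in Hp by ring.
      replace (snd (c i) - snd (c j)) with ((snd ps - snd (c j)) - (snd ps - snd (c i))) in Hp by ring.
      rewrite Ei1, Ei2, Ej1, Ej2 in Hp.
      assert (Ui : a1 i ^2 + a2 i ^2 = 1) by (apply Hunit; split; auto).
      assert (Uj : a1 j ^2 + a2 j ^2 = 1) by (apply Hunit; split; auto).
      set (d := a1 i * a1 j + a2 i * a2 j).
      assert (Hq : (mu * r j * a1 j - mu * r i * a1 i) ^ 2 + (mu * r j * a2 j - mu * r i * a2 i) ^ 2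
                   = mu^2 * (r i ^2 + r j ^2 - 2 * r i * r j * d)).
      { unfold d. transitivity (mu^2 * (r j^2 * (a1 j ^2 + a2 j ^2) + r i^2 * (a1 i^2 + a2 i^2) - 2 * r i * r j * (a1 i * a1 j + a2 i * a2 j))); [ring|].
        rewrite Ui, Uj. ring. }
      rewrite Hq in Hp. clearbody d.
      destruct (Rlt_dec (-1/2) d) as [|Hd]; auto. exfalso. apply Rnot_lt_le in Hd.
      assert (Hrr : 0 < r i * r j) by (apply Rmult_lt_0_compat; auto).
      assert (H1 : r i ^2 + r j^2 + r i * r j <= r i ^2 + r j ^2 - 2 * r i * r j * d) by nra.
      assert (H2 : 3 * (r i + r j)^2 <= 4 * (r i ^2 + r j^2 + r i * r j)) by (pose proof (pow2_ge_0 (r i - r j)); nra).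
      assert (H3 : 0 < (r i + r j)^2) by (apply pow_lt; lra).
      assert (H4 : 3 * mu^2 * (r i + r j)^2 <= 4 * (nu * (r i + r j))^2).
      { apply Rle_trans with (4 * (mu^2 * (r i ^2 + r j ^2 - 2 * r i * r j * d))); [|lra].
        assert (Hm2 : 0 < mu^2) by (apply pow_lt; lra).
        assert (3 * (r i + r j)^2 <= 4 * (r i ^2 + r j ^2 - 2 * r i * r j * d)) by lra.
        replace (3 * mu ^ 2 * (r i + r j) ^ 2) with (mu^2 * (3 * (r i + r j)^2)) by ring.
        replace (4 * (mu ^ 2 * (r i ^ 2 + r j ^ 2 - 2 * r i * r j * d))) with (mu^2 * (4 * (r i ^ 2 + r j ^ 2 - 2 * r i * r j * d))) by ring.
        apply Rmult_le_compat_l; lra. }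
      replace ((nu * (r i + r j))^2) with (nu^2 * (r i + r j)^2) in H4 by ring.
      assert (0 < (3 * mu^2 - 4 * nu^2) * (r i + r j)^2) by (apply Rmult_lt_0_compat; lra).
      lra. }
  destruct (classic (PL = nil)) as [EPL|EPL].
  - exists 1, 0. intros s Hs Es. exfalso.
    assert (Hss : In (s, s) PL) by (apply HPL; split; split; auto). rewrite EPL in Hss. auto.
  - destruct (argmin_ex PL dt EPL) as [[i1 i2] [Hin Hmin]].
    apply HPL in Hin. destruct Hin as [A1 A2].
    exists (- (a1 i1 + a1 i2)), (- (a2 i1 + a2 i2)).
    intros s Hs Es.
    assert (As : act s) by (split; auto).
    assert (Hs1 : dt (i1, i2) <= dt (i1, s)) by (apply Hmin; apply HPL; auto).
    assert (Hs2 : dt (i1, i2) <= dt (i2, s)) by (apply Hmin; apply HPL; auto).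
    pose proof (Hpair i1 i2 A1 A2) as Hp.
    unfold dt in Hs1, Hs2, Hp; cbn [fst snd] in Hs1, Hs2, Hp.
    pose proof (vec_key (a1 i1) (a2 i1) (a1 i2) (a2 i2) (a1 s) (a2 s) (Hunit i1 A1) (Hunit i2 A2) (Hunit s As) Hp Hs1 Hs2) as K.
    destruct (Ha s Hs) as [E1 E2]. rewrite E1, E2.
    assert (0 < r s) by auto.
    assert (0 < mu * r s) by nra.
    replace (mu * r s * a1 s * - (a1 i1 + a1 i2) + mu * r s * a2 s * - (a2 i1 + a2 i2))
      with (- (mu * r s) * ((a1 i1 * a1 s + a2 i1 * a2 s) + (a1 i2 * a1 s + a2 i2 * a2 s))) by ring.
    nra.
Qed.

Lemma jung : exists p, forall i, (i < m)%nat -> pdist p (c i) <= sqrt (4/3) * nu * r i.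
Proof.
  destruct (fmin_exists m c r Hm1 Hr) as [ps Hps].
  set (mu := fmax m c r ps).
  assert (Hle : forall i, (i < m)%nat -> pdist ps (c i) <= mu * r i).
  { intros i Hi. assert (0 < r i) by auto. pose proof (fmax_ge m c r Hm1 i ps Hi).
    apply Rmult_le_reg_r with (/ r i). apply Rinv_0_lt_compat; auto.
    replace (pdist ps (c i) * / r i) with (pdist ps (c i) / r i) by reflexivity.
    replace (mu * r i * / r i) with mu by (field; lra). auto. }
  set (lJ := sqrt (4/3) * nu).
  assert (HlJ2 : lJ^2 = 4/3 * nu^2).
  { unfold lJ. rewrite Rpow_mult_distr, pow2_sqrt by lra. ring. }
  assert (HlJ : 0 < lJ) by (unfold lJ; apply Rmult_lt_0_compat; [apply sqrt_lt_R0; lra|auto]).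
  destruct (Rle_dec mu lJ) as [Hm|Hm].
  - exists ps. intros i Hi. assert (0 < r i) by auto. specialize (Hle i Hi). fold lJ. nra.
  - exfalso. apply Rnot_le_lt in Hm.
    assert (Hmu : 0 < mu) by lra.
    assert (Hnm : 4 * nu^2 < 3 * mu^2) by nra.
    destruct (direction ps mu Hmu Hnm) as [v1 [v2 Hv]].
    destruct (descent m c r Hm1 Hr ps mu v1 v2 Hmu Hle Hv) as [q Hq].
    specialize (Hps q). fold mu in Hps. lra.
Qed.
End Jung3.


Theorem lemma4p2 (m : nat) (c : nat -> R * R) (r : nat -> R) :
  (3 <= m)%nat ->
  (forall i, (i < m)%nat -> 0 < r i) ->
  (forall i j, (i < m)%nat -> (j < m)%nat -> i <> j -> (c i, r i) <> (c j, r j)) ->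
  0 < nuM m c r ->
  (forall lam, nuM m c r <= lam ->
     ((exists p : R * R, forall i, (i < m)%nat -> pdist p (c i) <= lam * r i)
      <-> 0 <= rhoM m c r lam))
  /\ 0 <= rhoM m c r (sqrt (4 / 3) * nuM m c r).
Proof.
  intros Hm Hr Hne Hnu.
  assert (Hpn : forall i j, (i < m)%nat -> (j < m)%nat -> i <> j -> pdist (c i) (c j) <= nuM m c r * (r i + r j)).
  { intros i j Hi Hj Hij.
    assert (0 < r i + r j) by (pose proof (Hr i Hi); pose proof (Hr j Hj); lra).
    assert (pdist (c i) (c j) / (r i + r j) <= nuM m c r).
    { unfold nuM. apply lmax_ge.
      apply (in_map (fun ij => pdist (c (fst ij)) (c (snd ij)) / (r (fst ij) + r (snd ij))) _ (i, j)).
      apply in_idx_pairs; auto. }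
    apply Rmult_le_reg_r with (/ (r i + r j)). apply Rinv_0_lt_compat; auto.
    replace (nuM m c r * (r i + r j) * / (r i + r j)) with (nuM m c r) by (field; lra). exact H0. }
  assert (P1 : forall lam, nuM m c r <= lam ->
     ((exists p : R * R, forall i, (i < m)%nat -> pdist p (c i) <= lam * r i)
      <-> 0 <= rhoM m c r lam)).
  { intros lam Hl. apply part1; auto; try lra.
    intros i j Hi Hj Hij. apply Rle_trans with (nuM m c r * (r i + r j)); auto.
    apply Rmult_le_compat_r; [|auto]. pose proof (Hr i Hi); pose proof (Hr j Hj); lra. }
  split; auto.
  assert (Hs : 1 <= sqrt (4/3)).
  { rewrite <- sqrt_1. apply sqrt_le_1_alt. lra. }
  apply P1. nra.
  apply jung; auto. lia.
Qed.
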